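(* Let $A$ be an algebra of Jordan type half over a field $\mathbb{F}$ of characteristic zero. If $a,b\in A$ are primitive axes of Jordan type half with $(a,b)=0$ or $(a,b)=1$, then $J=\langle\langle a,b\rangle\rangle$ is solid.
   Context: All algebras are commutative but not necessarily associative. For an element $x$ of an algebra $A$ and $\lambda\in\mathbb{F}$ write $A_\lambda(x)=\{u\in A: xu=\lambda u\}$. A primitive axis of Jordan type half in $A$ is an element $x\neq 0$ with $x^2=x$, $A=A_1(x)\oplus A_0(x)\oplus A_{1/2}(x)$, $A_1(x)=\mathbb{F}x$, and the fusion rules $A_1A_1\subseteq A_1$, $A_1A_0=0$, $A_0A_0\subseteq A_0$, $A_1A_{1/2}\subseteq A_{1/2}$, $A_0A_{1/2}\subseteq A_{1/2}$, $A_{1/2}A_{1/2}\subseteq A_1\oplus A_0$ (eigenspaces of $x$). An algebra of Jordan type half is a commutative algebra generated by primitive axes of Jordan type half. Such an algebra has a unique Frobenius form $(\cdot,\cdot)$: a bilinear form with $(uv,w)=(u,vw)$ and $(x,x)=1$ for every primitive axis $x$. $\langle\langle a,b\rangle\rangle$ denotes the subalgebra generated by $a,b$. Such a subalgebra $J$ is solid if every idempotent $c\in J$ with $c\neq0$ and $c\neq 1_J$ (the identity of $J$, if $J$ has one) is a primitive axis of Jordan type half in $A$. *)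

(* Defs.v *)
From HB Require Import structures.
From mathcomp Require Import all_boot all_order all_algebra.
Set Implicit Arguments. Unset Strict Implicit. Unset Printing Implicit Defensive.
Import Order.TTheory GRing.Theory Num.Theory.
Local Open Scope ring_scope.

Section JordanHalf.
Variables (F : fieldType) (V : lmodType F) (mul : V -> V -> V).

Definition comm_algebra : Prop :=
  (forall u v, mul u v = mul v u) /\
  (forall (k : F) u v w, mul (k *: u + v) w = k *: mul u w + mul v w).

Definition eigsp (x : V) (lam : F) (u : V) : Prop := mul x u = lam *: u.

Definition half : F := 2%:R^-1.

Definition primitive_axis (x : V) : Prop :=
  [/\ x <> 0, mul x x = x,
     (* A = A_1(x) + A_0(x) + A_{1/2}(x) (directness is automatic) *)
     (forall u, exists u1 u0 uh, u = u1 + u0 + uh /\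
        [/\ eigsp x 1 u1, eigsp x 0 u0 & eigsp x half uh]),
     (forall u, eigsp x 1 u -> exists k : F, u = k *: x) &
     ([/\ forall u v, eigsp x 1 u -> eigsp x 1 v -> eigsp x 1 (mul u v),
         forall u v, eigsp x 1 u -> eigsp x 0 v -> mul u v = 0,
         forall u v, eigsp x 0 u -> eigsp x 0 v -> eigsp x 0 (mul u v),
         forall u v, eigsp x 1 u -> eigsp x half v -> eigsp x half (mul u v) &
         forall u v, eigsp x 0 u -> eigsp x half v -> eigsp x half (mul u v)] /\
         forall u v, eigsp x half u -> eigsp x half v ->
           exists w1 w0, mul u v = w1 + w0 /\ eigsp x 1 w1 /\ eigsp x 0 w0)].

Definition gen (S : V -> Prop) (u : V) : Prop :=
  forall P : V -> Prop,
    (forall x, S x -> P x) -> P 0 ->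
    (forall x y, P x -> P y -> P (x + y)) ->
    (forall (k : F) x, P x -> P (k *: x)) ->
    (forall x y, P x -> P y -> P (mul x y)) -> P u.

Definition jordan_half_algebra : Prop :=
  comm_algebra /\ forall u, gen primitive_axis u.

Definition frobenius (form : V -> V -> F) : Prop :=
  [/\ (forall (k : F) u v w, form (k *: u + v) w = k * form u w + form v w),
      (forall (k : F) u v w, form u (k *: v + w) = k * form u v + form u w),
      (forall u v w, form (mul u v) w = form u (mul v w)) &
      (forall x, primitive_axis x -> form x x = 1)].

Definition gen2 (a b : V) : V -> Prop := gen (fun x => x = a \/ x = b).

Definition is_identity_of (J : V -> Prop) (e : V) : Prop :=
  J e /\ forall u, J u -> mul e u = u.

Definition solid (J : V -> Prop) : Prop :=
  forall c, J c -> mul c c = c -> c <> 0 -> ~ is_identity_of J c ->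
    primitive_axis c.

End JordanHalf.

(* Main.v *)
Require Import Defs.
From HB Require Import structures.
From mathcomp Require Import all_boot all_order all_algebra.
From mathcomp Require Import ring.
Set Implicit Arguments. Unset Strict Implicit. Unset Printing Implicit Defensive.
Import GRing.Theory.
Local Open Scope ring_scope.


Section Vec.
Variables (F : fieldType) (V : lmodType F).
Definition vec3 (E : V * V * V) (p q r : F) : V := p *: E.1.1 + q *: E.1.2 + r *: E.2.
Lemma vecD E p q r p' q' r' : vec3 E p q r + vec3 E p' q' r' = vec3 E (p + p') (q + q') (r + r').
Proof. by rewrite /vec3 !scalerDl addrACA [X in X + _ = _]addrACA -!addrA. Qed.
Lemma vecZ E k p q r : k *: vec3 E p q r = vec3 E (k * p) (k * q) (k * r).
Proof. by rewrite /vec3 !scalerDr !scalerA. Qed.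
Lemma vecN E p q r : - vec3 E p q r = vec3 E (- p) (- q) (- r).
Proof. by rewrite -scaleN1r vecZ !mulN1r. Qed.
Lemma vecB E p q r p' q' r' : vec3 E p q r - vec3 E p' q' r' = vec3 E (p - p') (q - q') (r - r').
Proof. by rewrite vecN vecD. Qed.
Lemma vec0 E : vec3 E 0 0 0 = 0.
Proof. by rewrite /vec3 !scale0r !addr0. Qed.
Lemma vec_e1 (x y z : V) : x = vec3 (x, y, z) 1 0 0.
Proof. by rewrite /vec3 /= scale1r !scale0r !addr0. Qed.
Lemma vec_e2 (x y z : V) : y = vec3 (x, y, z) 0 1 0.
Proof. by rewrite /vec3 /= scale1r !scale0r add0r addr0. Qed.
Lemma vec_e3 (x y z : V) : z = vec3 (x, y, z) 0 0 1.
Proof. by rewrite /vec3 /= scale1r !scale0r !add0r. Qed.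
Lemma vec_eq E p q r p' q' r' : p = p' -> q = q' -> r = r' -> vec3 E p q r = vec3 E p' q' r'.
Proof. by move=> -> -> ->. Qed.
Lemma vec_eq0 E p q r : p = 0 -> q = 0 -> r = 0 -> vec3 E p q r = 0.
Proof. by move=> -> -> ->; apply: vec0. Qed.
Lemma sub_eq0 (x y : V) : x - y = 0 -> x = y.
Proof. by move/eqP; rewrite subr_eq0 => /eqP. Qed.
Lemma vecE1 (E : V * V * V) : E.1.1 = vec3 E 1 0 0.
Proof. by rewrite /vec3 scale1r !scale0r !addr0. Qed.
Lemma vecE2 (E : V * V * V) : E.1.2 = vec3 E 0 1 0.
Proof. by rewrite /vec3 scale1r !scale0r add0r addr0. Qed.
Lemma vecE3 (E : V * V * V) : E.2 = vec3 E 0 0 1.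
Proof. by rewrite /vec3 scale1r !scale0r !add0r. Qed.
Lemma vec_mod (E : V * V * V) m1 m2 m3 (t p q r p' q' r' : F) : vec3 E m1 m2 m3 = 0 ->
  p - p' = t * m1 -> q - q' = t * m2 -> r - r' = t * m3 -> vec3 E p q r = vec3 E p' q' r'.
Proof. by move=> hm e1 e2 e3; apply: sub_eq0; rewrite vecB e1 e2 e3 -vecZ hm scaler0. Qed.

End Vec.

Ltac vnorm := rewrite ?(vecD, vecZ, vecN, vecB).


Ltac atom3 a b c := let E := fresh "E" in pose E := (a, b, c);
  rewrite -[a]/(E.1.1) -[b]/(E.1.2) -[c]/(E.2) ?(vecE1 E) ?(vecE2 E) ?(vecE3 E) ?scaler0 ?addr0 ?add0r; vnorm.

Ltac atom2 a b := let E := fresh "E" in pose E := (a, b, a);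
  rewrite -[a]/(E.1.1) -[b]/(E.1.2) ?(vecE1 E) ?(vecE2 E) ?scaler0 ?addr0 ?add0r; vnorm.

Section Poly.
Variable F : fieldType.
Hypothesis char0 : [pchar F] =i pred0.

Fixpoint PV (W : lmodType F) (n : nat) (f : F -> W) {struct n} : Prop :=
  match n with
  | 0 => exists v, forall x, f x = v
  | n'.+1 => exists v g, PV n' g /\ forall x, f x = v + x *: g x
  end.

Section W.
Variable W : lmodType F.
Implicit Types f g : F -> W.

Lemma PV_const n (v : W) : PV n (fun _ => v).
Proof.
elim: n v => [|n IH] v; first by exists v.
by exists v, (fun _ => 0); split; [apply: IH | move=> x; rewrite scaler0 addr0].
Qed.
Lemma PV_ext n f g : (forall x, f x = g x) -> PV n f -> PV n g.
Proof.
case: n => [|n] e.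
  by case=> v hv; exists v => x; rewrite -e.
by case=> v [h [hh hv]]; exists v, h; split=> // x; rewrite -e.
Qed.
Lemma PV_S n f : PV n f -> PV n.+1 f.
Proof.
elim: n f => [|n IH] f.
  case=> v hv; exists v, (fun _ => 0); split; first exact: PV_const.
  by move=> x; rewrite scaler0 addr0.
by case=> v [g [hg hf]]; exists v, g; split=> //; apply: IH.
Qed.
Lemma PV_le n m f : (n <= m)%N -> PV n f -> PV m f.
Proof.
elim: m => [|m IH]; first by rewrite leqn0 => /eqP ->.
rewrite leq_eqVlt => /orP [/eqP -> //|]; rewrite ltnS => hl h.
by apply: PV_S; apply: IH.
Qed.
Lemma PV_add n f g : PV n f -> PV n g -> PV n (fun x => f x + g x).
Proof.
elim: n f g => [|n IH] f g.
  by case=> v hv [w hw]; exists (v + w) => x; rewrite hv hw.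
case=> v [f' [hf' ef]] [w [g' [hg' eg]]].
exists (v + w), (fun x => f' x + g' x); split; first exact: IH.
by move=> x; rewrite ef eg scalerDr addrACA.
Qed.
Lemma PV_X n f : PV n f -> PV n.+1 (fun x => x *: f x).
Proof. by move=> h; exists 0, f; split=> // x; rewrite add0r. Qed.

Lemma PV_lin (W2 : lmodType F) (T : W -> W2) n f :
  (forall u v, T (u + v) = T u + T v) -> (forall k u, T (k *: u) = k *: T u) ->
  PV n f -> PV n (fun x => T (f x)).
Proof.
move=> TD TZ; elim: n f => [|n IH] f.
  by case=> v hv; exists (T v) => x; rewrite hv.
case=> v [g [hg ef]]; exists (T v), (fun x => T (g x)); split; first exact: IH.
by move=> x; rewrite ef TD TZ.
Qed.

Lemma PV_scale n k f : PV n f -> PV n (fun x => k *: f x).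
Proof.
apply: (PV_lin (T := fun u => k *: u)) => [u w|k' u]; first by rewrite scalerDr.
by rewrite !scalerA mulrC.
Qed.

Lemma PV_comp n f s : PV n f -> PV n (fun t => f (s * t)).
Proof.
elim: n f => [|n IH] f.
  by case=> v hv; exists v => x; rewrite hv.
case=> v [g [hg ef]]; exists v, (fun t => s *: g (s * t)); split.
  by apply: PV_scale; apply: IH.
by move=> t; rewrite ef scalerA [t * s]mulrC.
Qed.

Lemma PV_factor n f r : PV n.+1 f -> exists h, PV n h /\ forall x, f x - f r = (x - r) *: h x.
Proof.
elim: n f => [|n IH] f.
  case=> v [g [[w hw] ef]]; exists (fun _ => w); split; first by exists w.
  move=> x; rewrite !ef !hw.
  atom2 v w.
  by apply: vec_eq; ring.
case=> v [g [hg ef]]; have [h [hh eh]] := IH _ hg.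
exists (fun x => g x + r *: h x); split.
  apply: PV_add; first exact: hg.
  by apply: PV_S; apply: PV_scale.
move=> x; rewrite !ef.
have egr : g r = g x - (x - r) *: h x by rewrite -(eh x) opprB addrC subrK.
rewrite egr; atom3 v (g x) (h x).
by apply: vec_eq; ring.
Qed.

Lemma natB_neq0 (k m : nat) : (m < k)%N -> (k%:R : F) - m%:R != 0.
Proof.
move=> h; rewrite -natrB ?(ltnW h) //.
by move/pcharf0P: char0 => ->; rewrite subn_eq0 -ltnNge.
Qed.

Lemma PV_vanish n f m : PV n f -> (forall k, (m <= k)%N -> f k%:R = 0) -> forall x, f x = 0.
Proof.
elim: n f m => [|n IH] f m.
  by case=> v hv hz x; rewrite hv -(hv m%:R) hz.
move=> hf hz; have [h [hh eh]] := PV_factor (m%:R) hf.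
have hr : f m%:R = 0 by apply: hz.
have h0 : forall x, h x = 0.
  apply: (IH _ m.+1 hh) => k hk; have := eh k%:R.
  rewrite hz ?(ltnW hk) // hr subrr => /esym /eqP.
  by rewrite scaler_eq0 (negbTE (natB_neq0 hk)) /= => /eqP.
by move=> x; have := eh x; rewrite hr subr0 h0 scaler0.
Qed.

Definition pf f := exists n, PV n f.

Lemma pf_const v : pf (fun _ => v). Proof. by exists 0%N, v. Qed.
Lemma pf_ext f g : (forall x, f x = g x) -> pf f -> pf g.
Proof. by move=> e [n h]; exists n; apply: PV_ext h. Qed.
Lemma pf_add f g : pf f -> pf g -> pf (fun x => f x + g x).
Proof.
move=> [n hf] [m hg]; exists (maxn n m); apply: PV_add.
  by apply: (PV_le (leq_maxl n m)).
by apply: (PV_le (leq_maxr n m)).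
Qed.
Lemma pf_scale k f : pf f -> pf (fun x => k *: f x).
Proof.
by move=> [n h]; exists n; apply: PV_scale.
Qed.
Lemma pf_opp f : pf f -> pf (fun x => - f x).
Proof. by move=> h; apply: (pf_ext (f := fun x => (-1) *: f x)) => [x|]; [rewrite scaleN1r | apply: pf_scale]. Qed.
Lemma pf_sub f g : pf f -> pf g -> pf (fun x => f x - g x).
Proof. by move=> hf hg; apply: pf_add => //; apply: pf_opp. Qed.
Lemma pf_X f : pf f -> pf (fun x => x *: f x).
Proof. by move=> [n h]; exists n.+1; apply: PV_X. Qed.

Lemma pf_vanish f s : pf f -> s != 0 -> (forall k : nat, f (s * k%:R) = 0) -> forall x, f x = 0.
Proof.
move=> [n h] hs hz x.
have := PV_vanish (PV_comp s h) (m := 0%N) (fun k _ => hz k) (x / s).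
by rewrite mulrC divfK.
Qed.
End W.

Lemma PV_bilin (W W2 W3 : lmodType F) (B : W -> W2 -> W3) n m (f : F -> W) (g : F -> W2) :
  (forall u u' w, B (u + u') w = B u w + B u' w) -> (forall k u w, B (k *: u) w = k *: B u w) ->
  (forall u w w', B u (w + w') = B u w + B u w') -> (forall k u w, B u (k *: w) = k *: B u w) ->
  PV n f -> PV m g -> PV (n + m) (fun x => B (f x) (g x)).
Proof.
move=> BDl BZl BDr BZr; elim: n f => [|n IH] f.
  case=> v hv hg; rewrite add0n; apply: (PV_ext (f := fun x => B v (g x))).
    by move=> x; rewrite hv.
  by apply: (PV_lin (T := B v)).
case=> v [f' [hf' ef]] hg.
apply: (PV_ext (f := fun x => B v (g x) + x *: B (f' x) (g x))).
  by move=> x; rewrite ef BDl BZl.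
apply: PV_add.
  by apply: (PV_le (n := m)); [rewrite leq_addl | apply: (PV_lin (T := B v))].
by rewrite addSn; apply: PV_X; apply: IH.
Qed.


Lemma pf_bilin (W1 W2 W3 : lmodType F) (B : W1 -> W2 -> W3) f g :
  (forall u u' w, B (u + u') w = B u w + B u' w) -> (forall k u w, B (k *: u) w = k *: B u w) ->
  (forall u w w', B u (w + w') = B u w + B u w') -> (forall k u w, B u (k *: w) = k *: B u w) ->
  pf f -> pf g -> pf (fun x => B (f x) (g x)).
Proof.
by move=> h1 h2 h3 h4 [n hf] [m hg]; exists (n + m)%N; apply: PV_bilin.
Qed.
End Poly.


Section Alg.
Variables (F : fieldType) (V : lmodType F) (mul : V -> V -> V) (form : V -> V -> F).
Hypothesis char0 : [pchar F] =i pred0.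
Hypothesis hca : comm_algebra mul.
Hypothesis hfr : frobenius mul form.

Local Notation hf := (Defs.half F).

Lemma h2 : (2%:R : F) != 0.
Proof. by move/pcharf0P: char0 => ->. Qed.
Lemma natF_neq0 n : (n.+1%:R : F) != 0.
Proof. by move/pcharf0P: char0 => ->. Qed.

Lemma mulC u v : mul u v = mul v u. Proof. by case: hca. Qed.
Lemma mul0l w : mul 0 w = 0.
Proof.
case: hca => _ h; have := h 1 0 0 w; rewrite !scale1r addr0 => e.
by apply: (@addrI _ (mul 0 w)); rewrite addr0 -e.
Qed.
Lemma mulZl k u w : mul (k *: u) w = k *: mul u w.
Proof. by case: hca => _ h; have := h k u 0 w; rewrite !addr0 mul0l addr0. Qed.
Lemma mulDl u v w : mul (u + v) w = mul u w + mul v w.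
Proof. by case: hca => _ h; have := h 1 u v w; rewrite !scale1r. Qed.
Lemma mulNl u w : mul (- u) w = - mul u w.
Proof. by rewrite -scaleN1r mulZl scaleN1r. Qed.
Lemma mulBl u v w : mul (u - v) w = mul u w - mul v w.
Proof. by rewrite mulDl mulNl. Qed.
Lemma mul0r w : mul w 0 = 0. Proof. by rewrite mulC mul0l. Qed.
Lemma mulZr k u w : mul w (k *: u) = k *: mul w u.
Proof. by rewrite mulC mulZl mulC. Qed.
Lemma mulDr u v w : mul w (u + v) = mul w u + mul w v.
Proof. by rewrite mulC mulDl !(mulC w). Qed.
Lemma mulNr u w : mul w (- u) = - mul w u.
Proof. by rewrite mulC mulNl mulC. Qed.
Lemma mulBr u v w : mul w (u - v) = mul w u - mul w v.
Proof. by rewrite mulDr mulNr. Qed.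

Lemma mul_vec3l E p q r w :
  mul (vec3 E p q r) w = vec3 (mul E.1.1 w, mul E.1.2 w, mul E.2 w) p q r.
Proof. by rewrite /vec3 !mulDl !mulZl. Qed.
Lemma mul_vec3r E p q r w :
  mul w (vec3 E p q r) = vec3 (mul w E.1.1, mul w E.1.2, mul w E.2) p q r.
Proof. by rewrite /vec3 !mulDr !mulZr. Qed.
Lemma vec_scaled (e1 e2 e3 : V) k1 k2 k3 p q r :
  vec3 (k1 *: e1, k2 *: e2, k3 *: e3) p q r = vec3 (e1, e2, e3) (p * k1) (q * k2) (r * k3).
Proof. by rewrite /vec3 /= !scalerA. Qed.

Lemma formDl u v w : form (u + v) w = form u w + form v w.
Proof. by case: hfr => h _ _ _; have := h 1 u v w; rewrite scale1r mul1r. Qed.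
Lemma form0l w : form 0 w = 0.
Proof.
have := formDl 0 0 w; rewrite addr0 => e.
by apply: (@addrI _ (form 0 w)); rewrite addr0 -e.
Qed.
Lemma formZl k u w : form (k *: u) w = k * form u w.
Proof. by case: hfr => h _ _ _; have := h k u 0 w; rewrite !addr0 form0l addr0. Qed.
Lemma formDr u v w : form w (u + v) = form w u + form w v.
Proof. by case: hfr => _ h _ _; have := h 1 w u v; rewrite scale1r mul1r. Qed.
Lemma form0r w : form w 0 = 0.
Proof.
have := formDr 0 0 w; rewrite addr0 => e.
by apply: (@addrI _ (form w 0)); rewrite addr0 -e.
Qed.
Lemma formZr k u w : form w (k *: u) = k * form w u.
Proof. by case: hfr => _ h _ _; have := h k w u 0; rewrite !addr0 form0r addr0. Qed.
Lemma formA u v w : form (mul u v) w = form u (mul v w).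
Proof. by case: hfr. Qed.
Lemma form_axis x : primitive_axis mul x -> form x x = 1.
Proof. by case: hfr => _ _ _; apply. Qed.
Lemma form_vec3l E p q r w :
  form (vec3 E p q r) w = p * form E.1.1 w + q * form E.1.2 w + r * form E.2 w.
Proof. by rewrite /vec3 !formDl !formZl. Qed.
Lemma form_vec3r E p q r w :
  form w (vec3 E p q r) = p * form w E.1.1 + q * form w E.1.2 + r * form w E.2.
Proof. by rewrite /vec3 !formDr !formZr. Qed.

Ltac fl := try unfold Defs.half; field; first [done | exact: h2].

Definition P1 x u := 2%:R *: mul x (mul x u) - mul x u.
Definition Ph x u := 4%:R *: (mul x u - mul x (mul x u)).
Definition P0 x u := u - P1 x u - Ph x u.

Lemma mul_eig x e1 e0 eh p q r :
  eigsp mul x 1 e1 -> eigsp mul x 0 e0 -> eigsp mul x hf eh ->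
  mul x (vec3 (e1, e0, eh) p q r) = vec3 (e1, e0, eh) p 0 (r * hf).
Proof.
rewrite /eigsp => h1 h0 hh; rewrite mul_vec3r /= h1 h0 hh vec_scaled.
by rewrite mulr1 mulr0.
Qed.

Lemma proj_eig x e1 e0 eh p q r :
  eigsp mul x 1 e1 -> eigsp mul x 0 e0 -> eigsp mul x hf eh ->
  [/\ P1 x (vec3 (e1, e0, eh) p q r) = vec3 (e1, e0, eh) p 0 0,
      P0 x (vec3 (e1, e0, eh) p q r) = vec3 (e1, e0, eh) 0 q 0 &
      Ph x (vec3 (e1, e0, eh) p q r) = vec3 (e1, e0, eh) 0 0 r].
Proof.
move=> h1 h0 hh.
have e1' : P1 x (vec3 (e1, e0, eh) p q r) = vec3 (e1, e0, eh) p 0 0.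
  rewrite /P1 !mul_eig //; vnorm; apply: vec_eq; rewrite /Defs.half; fl.
have eh' : Ph x (vec3 (e1, e0, eh) p q r) = vec3 (e1, e0, eh) 0 0 r.
  rewrite /Ph !mul_eig //; vnorm; apply: vec_eq; rewrite /Defs.half; fl.
split => //; rewrite /P0 e1' eh'; vnorm; apply: vec_eq; ring.
Qed.

Lemma Psum x u : u = P1 x u + P0 x u + Ph x u.
Proof. by rewrite /P0 addrA subrK addrC subrK. Qed.

Lemma eig_0 x lam : eigsp mul x lam 0.
Proof. by rewrite /eigsp mul0r scaler0. Qed.

Lemma Pfix1 x u : eigsp mul x 1 u -> P1 x u = u.
Proof.
move=> h; have := proj_eig 1 0 0 h (eig_0 x 0) (eig_0 x hf).
by case=> e _ _; rewrite -!vec_e1 in e.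
Qed.
Lemma Pfix0 x u : eigsp mul x 0 u -> P0 x u = u.
Proof.
move=> h; have := proj_eig 0 1 0 (eig_0 x 1) h (eig_0 x hf).
by case=> _ e _; rewrite -!vec_e2 in e.
Qed.
Lemma Pfixh x u : eigsp mul x hf u -> Ph x u = u.
Proof.
move=> h; have := proj_eig 0 0 1 (eig_0 x 1) (eig_0 x 0) h.
by case=> _ _ e; rewrite -!vec_e3 in e.
Qed.

Lemma axis_dec x : primitive_axis mul x -> forall u, exists u1 u0 uh,
  [/\ u = vec3 (u1, u0, uh) 1 1 1, eigsp mul x 1 u1, eigsp mul x 0 u0 & eigsp mul x hf uh].
Proof.
case=> _ _ hd _ _ u; have [u1 [u0 [uh [-> [h1 h0 hh]]]]] := hd u.
by exists u1, u0, uh; split=> //; rewrite /vec3 /= !scale1r.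
Qed.

Lemma axis_P x : primitive_axis mul x -> forall u,
  [/\ eigsp mul x 1 (P1 x u), eigsp mul x 0 (P0 x u) & eigsp mul x hf (Ph x u)].
Proof.
move=> ax u; have [u1 [u0 [uh [-> h1 h0 hh]]]] := axis_dec ax u.
have [-> -> ->] := proj_eig 1 1 1 h1 h0 hh.
by rewrite -vec_e1 -vec_e2 -vec_e3.
Qed.

Lemma fix_scal (l f : F) : l != 1 -> f = l * f -> f = 0.
Proof.
move=> hl e; apply/eqP; move/eqP: e; rewrite -subr_eq0 -{1}(mul1r f) -mulrBl.
by rewrite mulf_eq0 subr_eq0 eq_sym (negbTE hl).
Qed.

Lemma form_eig x lam e : primitive_axis mul x -> eigsp mul x lam e -> lam != 1 ->
  form x e = 0 /\ form e x = 0.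
Proof.
case=> _ idem _ _ _ he hl; split; apply: (fix_scal hl).
  by rewrite -{1}idem formA he formZr.
by rewrite -{1}idem -formA mulC he formZl.
Qed.

Lemma hf_neq1 : hf != 1.
Proof.
apply/eqP => e; have : (2%:R : F) * hf = 1 by rewrite /Defs.half mulfV // h2.
by rewrite e mulr1 => /eqP; rewrite -subr_eq0 (_ : 2%:R - 1 = 1 :> F) ?oner_eq0 // -addrA subrr addr0.
Qed.

Definition M x u := 2%:R *: mul x (mul x (mul x u)) - 3%:R *: mul x (mul x u) + mul x u.

Definition good x := [/\ x <> 0, mul x x = x, (forall u, M x u = 0),
  (forall u, P1 x u - form x u *: x = 0) &
  (forall u v, [/\ mul x (mul (P0 x u) (P0 x v)) = 0,
     mul x (mul (P0 x u) (Ph x v)) - hf *: mul (P0 x u) (Ph x v) = 0 &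
     Ph x (mul (Ph x u) (Ph x v)) = 0])].

Lemma axis_good x : primitive_axis mul x -> good x.
Proof.
move=> ax; have n01 : (0:F) != 1 by rewrite eq_sym oner_neq0.
have ax' := ax; case: ax' => nz idem hd one [[f11 f10 f00 f1h f0h] fhh].
split => //.
- move=> u; have [u1 [u0 [uh [-> h1 h0 hh]]]] := axis_dec ax u.
  rewrite /M !(mul_eig _ _ _ h1 h0 hh); vnorm; apply: vec_eq0; fl.
- move=> u; have [u1 [u0 [uh [-> h1 h0 hh]]]] := axis_dec ax u.
  have [-> _ _] := proj_eig 1 1 1 h1 h0 hh.
  rewrite -vec_e1 form_vec3r /= (form_eig ax h0 n01).1.
  rewrite (form_eig ax hh hf_neq1).1.
  have [k ->] := one _ h1; rewrite formZr (form_axis ax).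
  by rewrite !mul1r mulr1 ?mulr0 !addr0 subrr.
move=> u v; have [_ h0u hhu] := axis_P ax u; have [_ h0v hhv] := axis_P ax v.
split.
- by rewrite (f00 _ _ h0u h0v) scale0r.
- by rewrite (f0h _ _ h0u hhv) subrr.
have [w1 [w0 [-> [h1 h0]]]] := fhh _ _ hhu hhv.
have -> : w1 + w0 = vec3 (w1, w0, 0) 1 1 0 by rewrite /vec3 /= !scale1r scale0r addr0.
have [_ _ ->] := proj_eig 1 1 0 h1 h0 (eig_0 x hf).
exact: vec0.
Qed.

Lemma Meig x u : M x u = 0 ->
  [/\ eigsp mul x 1 (P1 x u), eigsp mul x 0 (P0 x u) & eigsp mul x hf (Ph x u)].
Proof.
rewrite /eigsp /P0 /P1 /Ph /M scale0r scale1r !(mulBr, mulZr).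
set L3 := mul x (mul x (mul x u)); set L2 := mul x (mul x u); set L1 := mul x u.
clearbody L1 L2 L3; pose E := (L1, L2, L3).
rewrite -[L1]/(E.1.1) -[L2]/(E.1.2) -[L3]/(E.2).
rewrite !vecE1 !vecE2 !vecE3; vnorm; rewrite -(vec0 E) => hM; rewrite vec0 in hM.
split.
- by apply: (vec_mod (t := 1) hM); ring.
- by apply: (vec_mod (t := 1) hM); ring.
- by apply: (vec_mod (t := -2) hM); unfold Defs.half; field; exact: h2.
Qed.

Lemma good_axis x : good x -> primitive_axis mul x.
Proof.
case=> nz idem hM hI2 hF.
have P1e u : eigsp mul x 1 u -> P1 x u = u by apply: Pfix1.
have one : forall u, eigsp mul x 1 u -> exists k : F, u = k *: x.
  move=> u hu; exists (form x u); apply: sub_eq0; rewrite -{1}(P1e u hu); exact: hI2.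
have eigx : eigsp mul x 1 x by rewrite /eigsp idem scale1r.
split => //.
- move=> u; exists (P1 x u), (P0 x u), (Ph x u); split; first exact: Psum.
  by have [? ? ?] := Meig (hM u).
split; last first.
  move=> u v hu hv; have [_ _ h5] := hF u v.
  rewrite (Pfixh hu) (Pfixh hv) in h5.
  have [e1 e0 eh] := Meig (hM (mul u v)).
  exists (P1 x (mul u v)), (P0 x (mul u v)); split; last by [].
  by rewrite {1}(Psum x (mul u v)) h5 addr0.
split.
- move=> u v /one [k ->] /one [k' ->].
  by rewrite mulZl mulZr idem scalerA /eigsp mulZr idem scale1r.
- by move=> u v /one [k ->] hv; rewrite mulZl hv scale0r scaler0.
- move=> u v hu hv; have [h3 _ _] := hF u v.
  by rewrite (Pfix0 hu) (Pfix0 hv) in h3; rewrite /eigsp h3 scale0r.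
- move=> u v /one [k ->] hv.
  by rewrite /eigsp mulZl hv !mulZr hv !scalerA; congr (_ *: _); ring.
- move=> u v hu hv; have [_ h4 _] := hF u v.
  by rewrite (Pfix0 hu) (Pfixh hv) in h4; rewrite /eigsp; apply: sub_eq0.
Qed.

Definition tau x u := u + 8%:R *: (mul x (mul x u) - mul x u).

Lemma tauD x u v : tau x (u + v) = tau x u + tau x v.
Proof. by rewrite /tau !mulDr opprD addrACA scalerDr addrACA. Qed.
Lemma tauZ x k u : tau x (k *: u) = k *: tau x u.
Proof. by rewrite /tau !mulZr -scalerBr scalerA mulrC -scalerA -scalerDr. Qed.
Lemma tau_lin x (E : V * V * V) p q r :
  tau x (vec3 E p q r) = vec3 (tau x E.1.1, tau x E.1.2, tau x E.2) p q r.
Proof. by rewrite /vec3 !tauD !tauZ. Qed.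
Lemma tau_eig x e1 e0 eh p q r :
  eigsp mul x 1 e1 -> eigsp mul x 0 e0 -> eigsp mul x hf eh ->
  tau x (vec3 (e1, e0, eh) p q r) = vec3 (e1, e0, eh) p q (- r).
Proof.
move=> h1 h0 hh; rewrite /tau !(mul_eig _ _ _ h1 h0 hh); vnorm.
by apply: vec_eq; fl.
Qed.
Lemma tau_1 x e : eigsp mul x 1 e -> tau x e = 1 *: e.
Proof.
move=> h; rewrite {1}(vec_e1 e 0 0) (tau_eig 1 0 0 h (eig_0 x 0) (eig_0 x hf)).
by rewrite oppr0 -!vec_e1 scale1r.
Qed.
Lemma tau_0 x e : eigsp mul x 0 e -> tau x e = 1 *: e.
Proof.
move=> h; rewrite {1}(vec_e2 0 e 0) (tau_eig 0 1 0 (eig_0 x 1) h (eig_0 x hf)).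
by rewrite oppr0 -!vec_e2 scale1r.
Qed.
Lemma tau_h x e : eigsp mul x hf e -> tau x e = (-1) *: e.
Proof.
move=> h; rewrite {1}(vec_e3 0 0 e) (tau_eig 0 0 1 (eig_0 x 1) (eig_0 x 0) h).
by rewrite /vec3 /= !scale0r !add0r.
Qed.
Lemma tau_scaled x (m1 m2 m3 : V) s1 s2 s3 p q r :
  tau x m1 = s1 *: m1 -> tau x m2 = s2 *: m2 -> tau x m3 = s3 *: m3 ->
  tau x (vec3 (m1, m2, m3) p q r) = vec3 (m1, m2, m3) (p * s1) (q * s2) (r * s3).
Proof. by move=> e1 e2 e3; rewrite tau_lin /= e1 e2 e3 vec_scaled. Qed.

Lemma vec_nest_eq (E1 E2 E3 : V * V * V) (a1 b1 c1 a2 b2 c2 a3 b3 c3 p q r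
   a1' b1' c1' a2' b2' c2' a3' b3' c3' p' q' r' : F) :
  p * a1 = p' * a1' -> p * b1 = p' * b1' -> p * c1 = p' * c1' ->
  q * a2 = q' * a2' -> q * b2 = q' * b2' -> q * c2 = q' * c2' ->
  r * a3 = r' * a3' -> r * b3 = r' * b3' -> r * c3 = r' * c3' ->
  vec3 (vec3 E1 a1 b1 c1, vec3 E2 a2 b2 c2, vec3 E3 a3 b3 c3) p q r =
  vec3 (vec3 E1 a1' b1' c1', vec3 E2 a2' b2' c2', vec3 E3 a3' b3' c3') p' q' r'.
Proof.
move=> *; rewrite /vec3 /= !scalerDr !scalerA; congruence.
Qed.

Lemma tau_mul x u v : primitive_axis mul x ->
  tau x (mul u v) = mul (tau x u) (tau x v).
Proof.
move=> ax; have ax' := ax; case: ax' => _ _ _ _ [[f11 f10 f00 f1h f0h] fhh].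
have [u1 [u0 [uh [-> h1 h0 hh]]]] := axis_dec ax u.
have [v1 [v0 [vh [-> k1 k0 kh]]]] := axis_dec ax v.
rewrite (tau_eig _ _ _ h1 h0 hh) (tau_eig _ _ _ k1 k0 kh).
rewrite !mul_vec3l /= !mul_vec3r /=.
have fix0 : tau x 0 = 1 *: 0.
  by have := tauZ x 0 0; rewrite !scale0r => ->; rewrite scaler0.
have t11 := tau_1 (f11 _ _ h1 k1).
have t10 : tau x (mul u1 v0) = 1 *: mul u1 v0 by rewrite (f10 _ _ h1 k0) fix0.
have t1h := tau_h (f1h _ _ h1 kh).
have t01 : tau x (mul u0 v1) = 1 *: mul u0 v1 by rewrite mulC (f10 _ _ k1 h0) fix0.
have t00 := tau_0 (f00 _ _ h0 k0).
have t0h := tau_h (f0h _ _ h0 kh).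
have th1 := tau_h (f1h _ _ k1 hh); rewrite (mulC v1 uh) in th1.
have th0 := tau_h (f0h _ _ k0 hh); rewrite (mulC v0 uh) in th0.
have thh : tau x (mul uh vh) = 1 *: mul uh vh.
  have [w1 [w0 [-> [e1 e0]]]] := fhh _ _ hh kh.
  by rewrite tauD (tau_1 e1) (tau_0 e0) !scale1r.
rewrite tau_lin /= (tau_scaled _ _ _ t11 t10 t1h) (tau_scaled _ _ _ t01 t00 t0h).
rewrite (tau_scaled _ _ _ th1 th0 thh).
by apply: vec_nest_eq; ring.
Qed.

Lemma tau_inv x u : primitive_axis mul x -> tau x (tau x u) = u.
Proof.
move=> ax; have [u1 [u0 [uh [-> h1 h0 hh]]]] := axis_dec ax u.
by rewrite !(tau_eig _ _ _ h1 h0 hh) opprK.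
Qed.

Lemma aut_axis (g : V -> V) : (forall u, g (g u) = u) ->
  (forall u v, g (u + v) = g u + g v) -> (forall k u, g (k *: u) = k *: g u) ->
  (forall u v, g (mul u v) = mul (g u) (g v)) ->
  forall y, primitive_axis mul y -> primitive_axis mul (g y).
Proof.
move=> gi gD gZ gM y [nz idem hd one [[f11 f10 f00 f1h f0h] fhh]].
have g0 : g 0 = 0 by rewrite -(scale0r 0) gZ !scale0r.
have tr z lam u : eigsp mul z lam u -> eigsp mul (g z) lam (g u).
  by rewrite /eigsp -gM => ->; exact: gZ.
have tr' lam u : eigsp mul (g y) lam u -> eigsp mul y lam (g u).
  by move/(tr _ _ _); rewrite gi.
split.
- by move=> e; apply: nz; rewrite -(gi y) e g0.
- by rewrite -gM idem.
- move=> u; have [u1 [u0 [uh [eu [h1 h0 hh]]]]] := hd (g u).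
  exists (g u1), (g u0), (g uh); split; first by rewrite -!gD -eu gi.
  by split; apply: tr.
- by move=> u /tr' /one [k ek]; exists k; rewrite -(gi u) ek gZ.
split; first split.
- by move=> u v /tr' hu /tr' hv; have := tr _ _ _ (f11 _ _ hu hv); rewrite gM !gi.
- by move=> u v /tr' hu /tr' hv; rewrite -[mul u v]gi gM (f10 _ _ hu hv) g0.
- by move=> u v /tr' hu /tr' hv; have := tr _ _ _ (f00 _ _ hu hv); rewrite gM !gi.
- by move=> u v /tr' hu /tr' hv; have := tr _ _ _ (f1h _ _ hu hv); rewrite gM !gi.
- by move=> u v /tr' hu /tr' hv; have := tr _ _ _ (f0h _ _ hu hv); rewrite gM !gi.
move=> u v /tr' hu /tr' hv; have [w1 [w0 [e [e1 e0]]]] := fhh _ _ hu hv.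
exists (g w1), (g w0); split; first by rewrite -gD -e -gM !gi.
by split; apply: tr.
Qed.

Lemma tau_axis x y : primitive_axis mul x -> primitive_axis mul y ->
  primitive_axis mul (tau x y).
Proof.
move=> ax; apply: aut_axis.
- by move=> u; apply: tau_inv.
- exact: tauD.
- exact: tauZ.
- by move=> u v; apply: tau_mul.
Qed.

Lemma lin_vec3 (Q : V -> V) (E : V * V * V) p q r :
  (forall u v, Q (u + v) = Q u + Q v) -> (forall k u, Q (k *: u) = k *: Q u) ->
  Q (vec3 E p q r) = vec3 (Q E.1.1, Q E.1.2, Q E.2) p q r.
Proof. by move=> QD QZ; rewrite /vec3 !QD !QZ. Qed.

Lemma P1D x u v : P1 x (u + v) = P1 x u + P1 x v.
Proof. by rewrite /P1 !mulDr opprD scalerDr addrACA. Qed.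
Lemma P1Z x k u : P1 x (k *: u) = k *: P1 x u.
Proof. by rewrite /P1 !mulZr scalerA mulrC -scalerA -scalerBr. Qed.
Lemma PhD x u v : Ph x (u + v) = Ph x u + Ph x v.
Proof. by rewrite /Ph !mulDr opprD addrACA scalerDr. Qed.
Lemma PhZ x k u : Ph x (k *: u) = k *: Ph x u.
Proof. by rewrite /Ph !mulZr -scalerBr scalerA mulrC -scalerA. Qed.
Lemma P0D x u v : P0 x (u + v) = P0 x u + P0 x v.
Proof. rewrite /P0 P1D PhD; move: (P1 x u) (P1 x v) (Ph x u) (Ph x v) => a b c d. by rewrite !opprD [u + v + _]addrACA [X in X = _]addrACA. Qed.
Lemma P0Z x k u : P0 x (k *: u) = k *: P0 x u.
Proof. by rewrite /P0 P1Z PhZ -!scalerBr. Qed.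

Lemma P1_vec3 x E p q r : P1 x (vec3 E p q r) = vec3 (P1 x E.1.1, P1 x E.1.2, P1 x E.2) p q r.
Proof. by apply: lin_vec3; [apply: P1D | apply: P1Z]. Qed.
Lemma P0_vec3 x E p q r : P0 x (vec3 E p q r) = vec3 (P0 x E.1.1, P0 x E.1.2, P0 x E.2) p q r.
Proof. by apply: lin_vec3; [apply: P0D | apply: P0Z]. Qed.
Lemma Ph_vec3 x E p q r : Ph x (vec3 E p q r) = vec3 (Ph x E.1.1, Ph x E.1.2, Ph x E.2) p q r.
Proof. by apply: lin_vec3; [apply: PhD | apply: PhZ]. Qed.

Lemma Pe1 x e : eigsp mul x 1 e -> [/\ P1 x e = e, P0 x e = 0 & Ph x e = 0].
Proof.
move=> h; have := proj_eig 1 0 0 h (eig_0 x 0) (eig_0 x hf).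
by rewrite -!vec_e1 !vec0.
Qed.
Lemma Pe0 x e : eigsp mul x 0 e -> [/\ P1 x e = 0, P0 x e = e & Ph x e = 0].
Proof.
move=> h; have := proj_eig 0 1 0 (eig_0 x 1) h (eig_0 x hf).
by rewrite -!vec_e2 !vec0.
Qed.
Lemma Peh x e : eigsp mul x hf e -> [/\ P1 x e = 0, P0 x e = 0 & Ph x e = e].
Proof.
move=> h; have := proj_eig 0 0 1 (eig_0 x 1) (eig_0 x 0) h.
by rewrite -!vec_e3 !vec0.
Qed.

Lemma form_sym_axis x u : primitive_axis mul x -> form u x = form x u.
Proof.
move=> ax; have n01 : (0:F) != 1 by rewrite eq_sym oner_neq0.
have [u1 [u0 [uh [-> h1 h0 hh]]]] := axis_dec ax u.
have ax' := ax; case: ax' => _ _ _ one _; have [k ->] := one _ h1.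
rewrite form_vec3l form_vec3r /= (form_eig ax h0 n01).1 (form_eig ax h0 n01).2.
rewrite (form_eig ax hh hf_neq1).1 (form_eig ax hh hf_neq1).2.
by rewrite formZl formZr.
Qed.

Lemma axis_P1 x u : primitive_axis mul x -> P1 x u = form x u *: x.
Proof. by move=> ax; apply: sub_eq0; have [_ _ _ h _] := axis_good ax; apply: h. Qed.

Lemma vec_sub0 (E : V * V * V) p q r p' q' r' :
  vec3 E p q r = vec3 E p' q' r' -> vec3 E (p - p') (q - q') (r - r') = 0.
Proof. by rewrite -vecB => ->; rewrite subrr. Qed.

Lemma P1_0 x : P1 x 0 = 0. Proof. by rewrite -(scale0r 0) P1Z !scale0r. Qed.
Lemma P0_0 x : P0 x 0 = 0. Proof. by rewrite -(scale0r 0) P0Z !scale0r. Qed.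
Lemma Ph_0 x : Ph x 0 = 0. Proof. by rewrite -(scale0r 0) PhZ !scale0r. Qed.

Lemma table a b phi : primitive_axis mul a -> primitive_axis mul b -> form a b = phi ->
  [/\ b = vec3 (a, P0 a b, Ph a b) phi 1 1,
      mul (P0 a b) (Ph a b) = ((1 - phi) * hf) *: Ph a b,
      mul (Ph a b) (Ph a b) = (phi - phi * phi) *: a + phi *: P0 a b &
      mul (P0 a b) (P0 a b) = (1 - phi) *: P0 a b].
Proof.
move=> axa axb hab.
have [_ e0 eh] := axis_P axa b.
have ea : eigsp mul a 1 a by case: axa => _ idem _ _ _; rewrite /eigsp idem scale1r.
have eb : b = vec3 (a, P0 a b, Ph a b) phi 1 1.
  by rewrite {1}(Psum a b) (axis_P1 _ axa) hab /vec3 /= !scale1r.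
have hba : form b a = phi by rewrite form_sym_axis.
have fbab : mul b (mul b a) = hf *: mul b a + (hf * phi) *: b.
  have [_ e0' eh'] := axis_P axb a.
  have eb' : eigsp mul b 1 b by case: axb => _ idem _ _ _; rewrite /eigsp idem scale1r.
  have ea' : a = vec3 (b, P0 b a, Ph b a) phi 1 1.
    by rewrite {1}(Psum b a) (axis_P1 _ axb) hba /vec3 /= !scale1r.
  have -> : (hf * phi) *: b = (hf * phi) *: vec3 (b, P0 b a, Ph b a) 1 0 0 by rewrite -vec_e1.
  have ma : mul b a = vec3 (b, P0 b a, Ph b a) phi 0 (1 * hf).
    by rewrite {1}ea' (mul_eig _ _ _ eb' e0' eh').
  rewrite !ma (mul_eig _ _ _ eb' e0' eh'); vnorm; apply: vec_eq; fl.
have fb : mul b b = b by case: axb.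
have mab : mul b a = vec3 (a, P0 a b, Ph a b) phi 0 (1 * hf).
  by rewrite mulC {1}eb (mul_eig _ _ _ ea e0 eh).
rewrite mab in fbab.
move: e0 eh eb fbab; move: (P0 a b) (Ph a b) => b0 bh e0 eh eb fbab.
rewrite eb in fb; rewrite eb in fbab.
case: (axa) => _ idema _ _ [[f11 f10 f00 f1h f0h] fhh].
have mab0 : mul a b0 = 0 by rewrite e0 scale0r.
have mb0a : mul b0 a = 0 by rewrite mulC.
have mbha : mul bh a = hf *: bh by rewrite mulC.
have mbhb0 : mul bh b0 = mul b0 bh by rewrite mulC.
have eB0h := f0h _ _ e0 eh; have eB00 := f00 _ _ e0 e0.
have [w1 [w0 [eBhh [ew1 ew0]]]] := fhh _ _ eh eh.
have [p1a p0a pha] := Pe1 ea; have [p1b0 p0b0 phb0] := Pe0 e0.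
have [p1bh p0bh phbh] := Peh eh; have [p1B00 p0B00 phB00] := Pe0 eB00.
have [p1B0h p0B0h phB0h] := Peh eB0h; have [p1w1 p0w1 phw1] := Pe1 ew1.
have [p1w0 p0w0 phw0] := Pe0 ew0.
have hPh := congr1 (Ph a) fb.
rewrite !mul_vec3l /= !mul_vec3r /= idema mab0 eh mb0a mbha mbhb0 eBhh in hPh.
rewrite !Ph_vec3 /= !PhZ !PhD Ph_0 pha phb0 phbh phB00 phB0h phw1 phw0 in hPh.
have hB0h : mul b0 bh = ((1 - phi) * hf) *: bh.
  move: hPh; rewrite addr0 /vec3 /= !scaler0 ?add0r ?addr0; move: (mul b0 bh) => B.
  atom2 bh B; move/vec_sub0 => h; apply: (vec_mod (t := hf) h); fl.
have hP1 := congr1 (P1 a) fb.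
rewrite !mul_vec3l /= !mul_vec3r /= idema mab0 eh mb0a mbha mbhb0 eBhh in hP1.
rewrite !P1_vec3 /= !P1Z !P1D P1_0 p1a p1b0 p1bh p1B00 p1B0h p1w1 p1w0 in hP1.
have hw1 : w1 = (phi - phi * phi) *: a.
  move: hP1; rewrite /vec3 /= !scaler0 ?add0r ?addr0.
  atom2 a w1; move/vec_sub0 => h; apply: (vec_mod (t := 1) h); fl.
have hP0 := congr1 (P0 a) fbab.
rewrite !mul_vec3l /= !mul_vec3r /= idema mab0 eh mb0a mbha mbhb0 eBhh in hP0.
rewrite !(P0_vec3, P0Z, P0D) /= P0_0 ?p0a ?p0b0 ?p0bh ?p0B00 ?p0B0h ?p0w1 ?p0w0 in hP0.
have hw0 : w0 = phi *: b0.
  move: hP0; rewrite /vec3 /= !scaler0 ?add0r ?addr0; move: (mul b0 b0) => B.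
  atom3 b0 w0 B; move/vec_sub0 => h; apply: (vec_mod (t := 2%:R) h); fl.
have hP0' := congr1 (P0 a) fb.
rewrite !mul_vec3l /= !mul_vec3r /= idema mab0 eh mb0a mbha mbhb0 eBhh in hP0'.
rewrite !P0_vec3 /= !P0Z !P0D P0_0 p0a p0b0 p0bh p0B00 p0B0h p0w1 p0w0 in hP0'.
split => //; first by rewrite eBhh hw1 hw0.
move: hP0'; rewrite hw0 /vec3 /= !scaler0 ?add0r ?addr0; move: (mul b0 b0) => B.
atom2 b0 B; move/vec_sub0 => h; apply: (vec_mod (t := 1) h); fl.
Qed.

Section Fam.
Variables (a b0 bh : V) (phi : F).
Hypothesis axa : primitive_axis mul a.
Hypothesis e0 : eigsp mul a 0 b0.
Hypothesis eh : eigsp mul a hf bh.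
Hypothesis T0h : mul b0 bh = ((1 - phi) * hf) *: bh.
Hypothesis Thh : mul bh bh = (phi - phi * phi) *: a + phi *: b0.
Hypothesis T00 : mul b0 b0 = (1 - phi) *: b0.
Hypothesis hphi : phi = 0 \/ phi = 1.
Hypothesis axb : primitive_axis mul (vec3 (a, b0, bh) phi 1 1).

Local Notation E := (a, b0, bh).

Lemma ea : eigsp mul a 1 a.
Proof. by case: axa => _ idem _ _ _; rewrite /eigsp idem scale1r. Qed.

Lemma mulvec x y z x' y' z' : mul (vec3 E x y z) (vec3 E x' y' z') =
  vec3 E (x * x' + (phi - phi * phi) * (z * z')) ((1 - phi) * (y * y') + phi * (z * z'))
         (hf * (x * z' + z * x') + ((1 - phi) * hf) * (y * z' + z * y')).
Proof.
have idem : mul a a = a by case: axa.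
have mab0 : mul a b0 = 0 by rewrite e0 scale0r.
have mb0a : mul b0 a = 0 by rewrite mulC.
have mbha : mul bh a = hf *: bh by rewrite mulC.
have mbhb0 : mul bh b0 = mul b0 bh by rewrite mulC.
rewrite !mul_vec3l /= !mul_vec3r /= idem mab0 eh mb0a mbha mbhb0 T0h Thh T00.
rewrite /vec3 /= !scaler0 ?addr0 ?add0r.
atom3 a b0 bh.
by apply: vec_eq; fl.
Qed.

Definition cg (g : F) := vec3 E 1 (phi * (g * g)) g.
Definition dd : F := 4%:R * phi - 2%:R.

Lemma cg_idem g : mul (cg g) (cg g) = cg g.
Proof. by rewrite /cg mulvec; apply: vec_eq; case: hphi => ->; fl. Qed.

Lemma cg_nz g : cg g <> 0.
Proof.
have n01 : (0:F) != 1 by rewrite eq_sym oner_neq0.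
move=> e; have := congr1 (form a) e; rewrite form0r /cg form_vec3r /=.
rewrite (form_axis axa) (form_eig axa e0 n01).1 (form_eig axa eh hf_neq1).1.
by rewrite !mulr0 !addr0 mulr1 => /eqP; rewrite oner_eq0.
Qed.

Lemma tau_a_cg g : tau a (cg g) = cg (- g).
Proof. by rewrite /cg (tau_eig _ _ _ ea e0 eh); apply: vec_eq; ring. Qed.

Lemma tau_b_cg g : tau (vec3 E phi 1 1) (cg g) = cg (dd - g).
Proof.
rewrite /tau /cg !mulvec; vnorm; rewrite /dd; apply: vec_eq; case: hphi => ->; fl.
Qed.

Lemma dd_neq0 : dd != 0.
Proof.
rewrite /dd; case: hphi => ->.
  by rewrite mulr0 add0r oppr_eq0 h2.
have -> : (4%:R * 1 - 2%:R : F) = 2%:R by rewrite mulr1 -natrB.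
exact: h2.
Qed.

Lemma cg_axis_nat (n : nat) : primitive_axis mul (cg (dd * n%:R)).
Proof.
elim: n => [|n IH].
  by rewrite mulr0 /cg mulr0 mulr0 -vec_e1.
have -> : cg (dd * n.+1%:R) = tau (vec3 E phi 1 1) (tau a (cg (dd * n%:R))).
  by rewrite tau_a_cg tau_b_cg; congr cg; rewrite -addn1 natrD; ring.
by apply: tau_axis => //; apply: tau_axis.
Qed.

Lemma pf_mul (f g : F -> V) : pf f -> pf g -> pf (fun x => mul (f x) (g x)).
Proof. by apply: pf_bilin; [apply: mulDl | apply: mulZl | move=> *; apply: mulDr | move=> *; apply: mulZr]. Qed.

Lemma pf_cg : pf cg.
Proof.
apply: (pf_ext (f := fun g => a + g *: (bh + g *: (phi *: b0)))).
  move=> x; rewrite /cg /vec3 /=; atom3 a b0 bh.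
  by apply: vec_eq; ring.
apply: pf_add; first exact: pf_const.
apply: pf_X; apply: pf_add; first exact: pf_const.
by apply: pf_X; apply: pf_const.
Qed.

Ltac pfauto := repeat first [ apply: pf_const | apply: pf_cg | apply: pf_add | apply: pf_sub
  | apply: pf_opp | apply: pf_scale | apply: pf_X | apply: pf_mul ].

Lemma cg_good g : good (cg g).
Proof.
have hv : forall (f : F -> V), pf f -> (forall k : nat, f (dd * k%:R) = 0) -> f g = 0.
  by move=> f hf hz; apply: (pf_vanish char0 hf dd_neq0 hz).
have ax k := axis_good (cg_axis_nat k).
split.
- exact: cg_nz.
- exact: cg_idem.
- move=> u; apply: (hv (fun g => M (cg g) u)); first by rewrite /M; pfauto.
  by move=> k; have [_ _ h _ _] := ax k; apply: h.
- move=> u; apply: (hv (fun g => P1 (cg g) u - form (cg g) u *: cg g)).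
    apply: (pf_ext (f := fun g => P1 (cg g) u - (form a u *: cg g + g *: (form bh u *: cg g)
                  + g *: (g *: ((phi * form b0 u) *: cg g))))).
      move=> x; congr (_ - _).
      have -> : form (cg x) u = form a u + phi * (x * x) * form b0 u + x * form bh u.
        by rewrite /cg form_vec3l /= mul1r.
      by rewrite !scalerA -!scalerDl; congr (_ *: _); ring.
    by rewrite /P1; pfauto.
  by move=> k; have [_ _ _ h _] := ax k; apply: h.
move=> u v; split.
- apply: (hv (fun g => mul (cg g) (mul (P0 (cg g) u) (P0 (cg g) v)))).
    by rewrite /P0 /P1 /Ph; pfauto.
  by move=> k; have [_ _ _ _ h] := ax k; have [h' _ _] := h u v.
- apply: (hv (fun g => mul (cg g) (mul (P0 (cg g) u) (Ph (cg g) v)) - hf *: mul (P0 (cg g) u) (Ph (cg g) v))).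
    by rewrite /P0 /P1 /Ph; pfauto.
  by move=> k; have [_ _ _ _ h] := ax k; have [_ h' _] := h u v.
- apply: (hv (fun g => Ph (cg g) (mul (Ph (cg g) u) (Ph (cg g) v)))).
    by rewrite /P0 /P1 /Ph; pfauto.
  by move=> k; have [_ _ _ _ h] := ax k; have [_ _ h'] := h u v.
Qed.

Lemma cg_axis g : primitive_axis mul (cg g).
Proof. exact: good_axis (cg_good g). Qed.
End Fam.

Lemma sq_idem (k : F) (e : V) : e <> 0 -> (k * k) *: e = k *: e -> k = 0 \/ k = 1.
Proof.
move=> ne /eqP; rewrite -subr_eq0 -scalerBl scaler_eq0 => /orP [h|/eqP //].
have : k * (k - 1) == 0 by rewrite mulrBr mulr1.
by rewrite mulf_eq0 subr_eq0 => /orP [/eqP->|/eqP->]; [left|right].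
Qed.

Lemma comps a b0 bh p q r p' q' r' :
  eigsp mul a 1 a -> eigsp mul a 0 b0 -> eigsp mul a hf bh ->
  vec3 (a, b0, bh) p q r = vec3 (a, b0, bh) p' q' r' ->
  [/\ p *: a = p' *: a, q *: b0 = q' *: b0 & r *: bh = r' *: bh].
Proof.
move=> ea e0 eh e.
have [h1 h2 h3] := proj_eig p q r ea e0 eh.
have [k1 k2 k3] := proj_eig p' q' r' ea e0 eh.
rewrite e in h1 h2 h3; rewrite h1 in k1; rewrite h2 in k2; rewrite h3 in k3.
by move: k1 k2 k3; rewrite /vec3 /= !scale0r ?addr0 ?add0r => -> -> ->.
Qed.

Lemma gen_span a b c : gen2 mul a b c -> forall b0 bh phi,
  (forall x y z x' y' z', mul (vec3 (a, b0, bh) x y z) (vec3 (a, b0, bh) x' y' z') =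
  vec3 (a, b0, bh) (x * x' + (phi - phi * phi) * (z * z')) ((1 - phi) * (y * y') + phi * (z * z'))
         (hf * (x * z' + z * x') + ((1 - phi) * hf) * (y * z' + z * y'))) ->
  b = vec3 (a, b0, bh) phi 1 1 ->
  exists x y z, c = vec3 (a, b0, bh) x y z.
Proof.
move=> hc b0 bh phi mv eb; apply: (hc (fun u => exists x y z, u = vec3 (a, b0, bh) x y z)).
- move=> x [->|->]; last by exists phi, 1, 1.
  by exists 1, 0, 0; rewrite -vec_e1.
- by exists 0, 0, 0; rewrite vec0.
- by move=> x y [p [q [r ->]]] [p' [q' [r' ->]]]; rewrite vecD; do 3 eexists.
- by move=> k x [p [q [r ->]]]; rewrite vecZ; do 3 eexists.
- by move=> x y [p [q [r ->]]] [p' [q' [r' ->]]]; rewrite mv; do 3 eexists.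
Qed.

Lemma gen_P0 a b : gen2 mul a b (a + P0 a b).
Proof.
move=> P hS h0 hadd hsc hmul.
have hsub x y : P x -> P y -> P (x - y).
  by move=> px py; apply: hadd => //; rewrite -scaleN1r; apply: hsc.
have Pa : P a by apply: hS; left.
have Pb : P b by apply: hS; right.
have Pab := hmul _ _ Pa Pb; have Paab := hmul _ _ Pa Pab.
apply: hadd => //; rewrite /P0 /P1 /Ph.
apply: (hsub); last by apply: hsc; apply: (hsub).
apply: (hsub) => //; apply: (hsub) => //; exact: hsc.
Qed.

Lemma Ph_other a b0 bh :
  (forall x y z x' y' z', mul (vec3 (a, b0, bh) x y z) (vec3 (a, b0, bh) x' y' z') =
  vec3 (a, b0, bh) (x * x' + (0 - 0 * 0) * (z * z')) ((1 - 0) * (y * y') + 0 * (z * z'))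
         (hf * (x * z' + z * x') + ((1 - 0) * hf) * (y * z' + z * y'))) ->
  Ph (vec3 (a, b0, bh) 0 1 1) (vec3 (a, b0, bh) 1 0 0) = vec3 (a, b0, bh) 0 0 1.
Proof. by move=> mv; rewrite /Ph !mv; vnorm; apply: vec_eq; fl. Qed.

Lemma main a b : primitive_axis mul a -> primitive_axis mul b ->
  form a b = 0 \/ form a b = 1 -> solid mul (gen2 mul a b).
Proof.
move=> axa axb hab c Jc idc nzc nid.
have [eb T0h Thh T00] := table axa axb (erefl (form a b)).
have [_ e0 eh] := axis_P axa b.
have ea : eigsp mul a 1 a by case: axa => _ idem _ _ _; rewrite /eigsp idem scale1r.
have anz : a <> 0 by case: axa.
have mv := mulvec axa e0 eh T0h Thh T00.
have axb' : primitive_axis mul (vec3 (a, P0 a b, Ph a b) (form a b) 1 1) by rewrite -eb.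
have cgax := cg_axis axa e0 eh T0h Thh T00 hab axb'.
have [x [y [z ec]]] := gen_span Jc mv eb.
have cid := idc; rewrite ec mv in cid.
have [cx cy cz] := comps ea e0 eh cid.
have hxx : (x * x) *: a = x *: a.
  by rewrite -cx; congr (_ *: _); case: hab => ->; ring.
have [hx|hx] := sq_idem anz hxx; subst x.
all: case: hab => hp; rewrite hp in cy cz mv eb T0h Thh.
(* x = 0, phi = 0 *)
- have cz' : (y * z) *: Ph a b = z *: Ph a b by rewrite -cz; congr (_ *: _); fl.
  have cy' : (y * y) *: P0 a b = y *: P0 a b by rewrite -cy; congr (_ *: _); ring.
  case: (eqVneq (P0 a b) 0) => [b00|b0n].
    have bh0 : Ph a b = 0.
      move: T0h; rewrite b00 mul0l => /esym /eqP; rewrite scaler_eq0 => /orP [|/eqP //].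
      by rewrite subr0 mul1r /Defs.half invr_eq0 (negbTE h2).
    by exfalso; apply: nzc; rewrite ec /vec3 /= b00 bh0 !scaler0 scale0r !addr0.
  have [hy|hy] := sq_idem (elimN eqP b0n) cy'; subst y.
    by exfalso; apply: nzc; rewrite ec /vec3 /= -cz' !GRing.mul0r !scale0r !addr0.
  have hba : form b a = 0 by rewrite (form_sym_axis _ axa) hp.
  have [eb2 T0h2 Thh2 T00_2] := table axb axa (erefl (form b a)).
  have [_ e02 eh2] := axis_P axb a.
  have axa' : primitive_axis mul (vec3 (b, P0 b a, Ph b a) (form b a) 1 1) by rewrite -eb2.
  have hab2 : form b a = 0 \/ form b a = 1 by left.
  have cgax2 := cg_axis axb e02 eh2 T0h2 Thh2 T00_2 hab2 axa'.
  have hPh : Ph b a = Ph a b.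
    by have := Ph_other mv; rewrite -eb -vec_e1 -vec_e3.
  have -> : c = cg b (P0 b a) (Ph b a) (form b a) (z - 1).
    rewrite ec /cg hba hPh.
    have -> : vec3 (b, P0 b a, Ph a b) 1 (0 * ((z - 1) * (z - 1))) (z - 1) = b + (z - 1) *: Ph a b.
      by rewrite /vec3 /= GRing.mul0r scale0r scale1r addr0.
    rewrite [X in X + _]eb [X in _ *: X](vec_e3 a (P0 a b) (Ph a b)); vnorm.
    by apply: vec_eq; ring.
  exact: cgax2.
(* x = 0, phi = 1 *)
- have cz' : 0 *: Ph a b = z *: Ph a b by rewrite -cz; congr (_ *: _); fl.
  have cy' : (z * z) *: P0 a b = y *: P0 a b by rewrite -cy; congr (_ *: _); ring.
  rewrite scale0r in cz'.
  have yb : y *: P0 a b = 0.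
    rewrite -cy'.
    have -> : P0 a b = mul (Ph a b) (Ph a b) by rewrite Thh mulr1 subrr scale0r add0r scale1r.
    by rewrite -scalerA -mulZl -mulZr -cz' mul0l.
  by exfalso; apply: nzc; rewrite ec /vec3 /= yb -cz' scale0r !addr0.
(* x = 1, phi = 0 *)
- have cz' : ((1 + y) * z) *: Ph a b = z *: Ph a b by rewrite -cz; congr (_ *: _); fl.
  have cy' : (y * y) *: P0 a b = y *: P0 a b by rewrite -cy; congr (_ *: _); ring.
  case: (eqVneq (P0 a b) 0) => [b00|b0n].
    have bh0 : Ph a b = 0.
      move: T0h; rewrite b00 mul0l => /esym /eqP; rewrite scaler_eq0 => /orP [|/eqP //].
      by rewrite subr0 mul1r /Defs.half invr_eq0 (negbTE h2).
    by rewrite ec /vec3 /= b00 bh0 !scaler0 !addr0 scale1r.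
  have [hy|hy] := sq_idem (elimN eqP b0n) cy'; subst y.
    have -> : c = cg a (P0 a b) (Ph a b) (form a b) z.
      by rewrite ec /cg hp GRing.mul0r.
    exact: cgax.
  have zb : z *: Ph a b = 0.
    move/eqP: cz'; rewrite -subr_eq0 -scalerBl (_ : (1 + 1) * z - z = z) ?(eqP) //.
      by move/eqP.
    ring.
  have ec' : c = vec3 (a, P0 a b, Ph a b) 1 1 0 by rewrite ec /vec3 /= zb scale0r.
  exfalso; apply: nid; split.
    have -> : c = a + P0 a b by rewrite ec' /vec3 /= !scale1r scale0r addr0.
    exact: gen_P0.
  move=> u Ju; have [x' [y' [z' ->]]] := gen_span Ju mv eb.
  by rewrite ec' mv; apply: vec_eq; fl.
(* x = 1, phi = 1 *)
- have cy' : (z * z) *: P0 a b = y *: P0 a b by rewrite -cy; congr (_ *: _); ring.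
  have -> : c = cg a (P0 a b) (Ph a b) (form a b) z.
    by rewrite ec /cg hp mul1r /vec3 /= cy'.
  exact: cgax.
Qed.
End Alg.


Theorem theorem2 (F : fieldType) (V : lmodType F) (mul : V -> V -> V)
    (form : V -> V -> F) :
  [pchar F] =i pred0 ->
  jordan_half_algebra mul ->
  frobenius mul form ->
  forall a b : V, primitive_axis mul a -> primitive_axis mul b ->
    (form a b = 0 \/ form a b = 1) ->
    solid mul (gen2 mul a b).
Proof.
move=> ch [hca _] hfr a b ha hb hab.
exact: (main ch hca hfr ha hb hab).
Qed.
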